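(* Let $T\in S(n,d)$ and let $\tau\subseteq[n]$ be a simplex on $\gamma_d$ with $\tau\le_{d+1}T$. Then $\tau$ is a face of $T$ if and only if there is no $\sigma\in\mathrm{sub}(T)$ with $\tau<_{d+1}\sigma$.
   Context: $\gamma_d=\{(t,t^2,\dots,t^d):t\in\mathbb{R}\}$. Fix $t_1<\dots<t_n$ and points $\gamma_d(t_i)$ identified with $i\in[n]$; $C(n,d)$ is their convex hull and $S(n,d)$ the set of triangulations of $C(n,d)$ with vertices in $[n]$. A simplex is a subset of size at most $d+1$, identified with its convex hull; simplices $\sigma,\tau$ overlap if $\mathrm{conv}(\sigma)\cap\mathrm{conv}(\tau)\supsetneq\mathrm{conv}(\sigma\cap\tau)$. The height function $h_\sigma:\mathrm{conv}(\sigma)\to\mathbb{R}$ gives the last coordinate of the point in the convex hull of the lifted points $\gamma_{d+1}(t_i)$, $i\in\sigma$, projecting to $p$. $\sigma<_{d+1}\tau$ means $\sigma,\tau$ overlap in $\mathbb{R}^d$ and $h_\sigma\le h_\tau$ on $\mathrm{conv}(\sigma)\cap\mathrm{conv}(\tau)$. For $T\in S(n,d)$, $h_T(p)=h_\rho(p)$ for $p\in\mathrm{conv}(\rho)$, $\rho\in T$; $\sigma\le_{d+1}T$ means $h_\sigma\le h_T$ on $\mathrm{conv}(\sigma)$. The submersion set is $\mathrm{sub}(T)=\{\sigma\subseteq[n]: \sigma\le_{d+1}T,\ \dim\sigma=\lceil d/2\rceil\}$ (i.e. $|\sigma|=\lceil d/2\rceil+1$). *)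

(* Defs.v *)
From HB Require Import structures.
From mathcomp Require Import all_boot all_order all_algebra.
From mathcomp Require Import reals.
Set Implicit Arguments. Unset Strict Implicit. Unset Printing Implicit Defensive.
Import Order.TTheory GRing.Theory Num.Theory.
Local Open Scope ring_scope.

Section Cyclic.
Variables (R : realType) (n d : nat) (t : 'I_n -> R).

Definition pt (i : 'I_n) : 'rV[R]_d := \row_(k < d) t i ^+ k.+1.

Definition convex_coef (S : {set 'I_n}) (lam : 'I_n -> R) : Prop :=
  (forall i, 0 <= lam i) /\ (forall i, i \notin S -> lam i = 0) /\
  \sum_i lam i = 1.

Definition in_conv (S : {set 'I_n}) (p : 'rV[R]_d) : Prop :=
  exists lam, convex_coef S lam /\ p = \sum_i lam i *: pt i.

(* hgt S p h : h = h_S(p), the last coordinate (t^(d+1)) of the point of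
   conv{gamma_{d+1}(t_i) : i in S} projecting to p. *)
Definition hgt (S : {set 'I_n}) (p : 'rV[R]_d) (h : R) : Prop :=
  exists lam, [/\ convex_coef S lam, p = \sum_i lam i *: pt i &
                  h = \sum_i lam i * t i ^+ d.+1].

(* sigma, tau overlap: conv sigma \cap conv tau strictly contains conv(sigma \cap tau)
   (the inclusion "contains" always holds). *)
Definition overlap (sigma tau : {set 'I_n}) : Prop :=
  exists p, [/\ in_conv sigma p, in_conv tau p & ~ in_conv (sigma :&: tau) p].

Definition hle_on (sigma tau : {set 'I_n}) : Prop :=
  forall p h1 h2, hgt sigma p h1 -> hgt tau p h2 -> h1 <= h2.

Definition lt_lift (sigma tau : {set 'I_n}) : Prop :=
  overlap sigma tau /\ hle_on sigma tau.

(* T in S(n,d): a set of d-simplices with vertices in [n] covering C(n,d)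
   and intersecting properly (no two overlap). *)
Definition triangulation (T : {set {set 'I_n}}) : Prop :=
  [/\ forall rho, rho \in T -> #|rho| = d.+1,
      forall p, in_conv setT p -> exists2 rho, rho \in T & in_conv rho p &
      forall rho rho', rho \in T -> rho' \in T -> ~ overlap rho rho'].

(* sigma <=_{d+1} T : h_sigma <= h_T on conv sigma, where h_T = h_rho on conv rho *)
Definition le_tri (sigma : {set 'I_n}) (T : {set {set 'I_n}}) : Prop :=
  forall rho, rho \in T -> hle_on sigma rho.

Definition in_sub (T : {set {set 'I_n}}) (sigma : {set 'I_n}) : Prop :=
  le_tri sigma T /\ #|sigma| = (uphalf d).+1.

Definition is_face (T : {set {set 'I_n}}) (tau : {set 'I_n}) : Prop :=
  exists2 rho, rho \in T & tau \subset rho.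

End Cyclic.

(* Main.v *)
Require Import Defs.
From HB Require Import structures.
From mathcomp Require Import all_boot all_order all_algebra.
From mathcomp Require Import reals.
From mathcomp Require Import ring lra.
From Stdlib Require Import Classical.
From mathcomp Require Import zify.
Set Implicit Arguments. Unset Strict Implicit. Unset Printing Implicit Defensive.
Import Order.TTheory GRing.Theory Num.Theory.
Local Open Scope ring_scope.

Section Poly.
Variables (R : realType) (n : nat) (t : 'I_n -> R).
Hypothesis t_incr : forall i j : 'I_n, (i < j)%N -> t i < t j.

Lemma t_le (i j : 'I_n) : (i <= j)%N -> t i <= t j.
Proof.
rewrite leq_eqVlt => /orP [/eqP E|/t_incr/ltW //].
by have -> : i = j by apply: val_inj.
Qed.

Definition altrel (c : 'I_n -> R) : rel 'I_n :=
  fun a b => (a < b)%N && (c a * c b < 0).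

Lemma neq0_cases (x : R) : x != 0 -> x < 0 \/ 0 < x.
Proof. by rewrite neq_lt => /orP. Qed.

Lemma prod_neg_neq0l (a b : R) : a * b < 0 -> a != 0.
Proof. by apply: contraTneq => ->; rewrite mul0r ltxx. Qed.
Lemma prod_neg_neq0r (a b : R) : a * b < 0 -> b != 0.
Proof. by apply: contraTneq => ->; rewrite mulr0 ltxx. Qed.

Lemma path_restr (c cq : 'I_n -> R) (x : 'I_n) (s : seq 'I_n) :
  (forall i, cq i != 0 -> cq i = c i) -> cq x != 0 ->
  path (altrel cq) x s -> path (altrel c) x s /\ cq (last x s) != 0.
Proof.
move=> hc; elim: s x => [|y s IH] x cx //= /andP [/andP [xy pxy] ps].
have cy : cq y != 0 := prod_neg_neq0r pxy.
have [ps' ly] := IH y cy ps; split=> //.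
by rewrite ps' /altrel xy -(hc x cx) -(hc y cy) pxy.
Qed.

Definition polyspec (m : nat) (c : 'I_n -> R) (l : 'I_n) (f : {poly R}) :=
  [/\ (size f <= m.+1)%N, 0 < lead_coef f * c l,
      (forall i, 0 <= c i * f.[t i]) & (forall i : 'I_n, (l <= i)%N -> 0 < c l * f.[t i])].

Lemma nocase m (c : 'I_n -> R) (l : 'I_n) : c l != 0 ->
  ~~ [exists j, c j * c l < 0] -> exists f, polyspec m c l f.
Proof.
move=> cl0 noj; exists (c l)%:P; split.
- by rewrite size_polyC; case: (_ != _).
- by rewrite lead_coefC; case: (neq0_cases cl0) => h; nra.
- move=> i; rewrite hornerC; move/existsPn: noj => /(_ i); rewrite ltNge negbK //.
- by move=> i _; rewrite hornerC; case: (neq0_cases cl0) => h; nra.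
Qed.

Lemma pick_j (c : 'I_n -> R) (l j0 : 'I_n) : c l != 0 ->
  (forall i : 'I_n, (l < i)%N -> c i = 0) -> c j0 * c l < 0 ->
  exists j : 'I_n, [/\ c j * c l < 0, (j < l)%N & forall i : 'I_n, c i * c l < 0 -> (i <= j)%N].
Proof.
move=> cl0 cr Pj0.
case: (@arg_maxnP _ j0 (fun j => c j * c l < 0) (fun j : 'I_n => val j) Pj0) => j Pj jmax.
have cj0 : c j != 0 := prod_neg_neq0l Pj.
exists j; split => //.
rewrite ltn_neqAle; apply/andP; split.
  apply/eqP => E; have E' : j = l by apply: val_inj.
  by subst j; move: Pj; case: (neq0_cases cl0) => h; nra.
by rewrite leqNgt; apply/negP => /cr /eqP; apply/negP.
Qed.

Lemma polyP (m : nat) : forall (c : 'I_n -> R) (l : 'I_n), c l != 0 ->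
  (forall i : 'I_n, (l < i)%N -> c i = 0) ->
  (forall x s, path (altrel c) x s -> (size s <= m)%N) ->
  exists f, polyspec m c l f.
Proof.
elim: m => [|m IH] c l cl0 cr hp;
  (case: (boolP [exists j, c j * c l < 0]) => [/existsP [j0 Pj0]|noj];
   last by apply: nocase).
all: have [j [Pj jl jmax]] := pick_j cl0 cr Pj0.
all: have cj0 : c j != 0 := prod_neg_neq0l Pj.
  by have := hp j [:: l]; rewrite /= /altrel jl Pj => /(_ isT).
pose cq := fun i : 'I_n => if (i <= j)%N then c i else 0.
have hcq : forall i, cq i != 0 -> cq i = c i.
  by move=> i; rewrite /cq; case: (i <= j)%N => //; rewrite eqxx.
have cqj : cq j != 0 by rewrite /cq leqnn.
have cqr : forall i : 'I_n, (j < i)%N -> cq i = 0.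
  by move=> i ji; rewrite /cq leqNgt ji.
have hp' : forall x s, path (altrel cq) x s -> (size s <= m)%N.
  move=> x [|y s] //= /andP [/andP [xy pxy] ps].
  have cx : cq x != 0 := prod_neg_neq0l pxy.
  have pp : path (altrel cq) x (y :: s) by rewrite /= /altrel xy pxy ps.
  have [Pc cL] := @path_restr c cq x (y :: s) hcq cx pp.
  set L := last x (y :: s) in Pc cL.
  have Lj : (L <= j)%N by move: cL; rewrite /cq; case: (L <= j)%N => //; rewrite eqxx.
  have cLe : cq L = c L by rewrite /cq Lj.
  have cL0 : c L != 0 by rewrite -cLe.
  case: (ltP (c L * c l) 0) => hL.
    have := hp x (rcons (y :: s) l); rewrite rcons_path Pc /altrel hL (leq_ltn_trans Lj jl).
    by rewrite size_rcons => /(_ isT).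
  have hLj : c L * c j < 0.
    case: (neq0_cases cl0) => h1; case: (neq0_cases cL0) => h2; nra.
  have Lj' : (L < j)%N.
    rewrite ltn_neqAle Lj andbT; apply/eqP => E; have E' : L = j by apply: val_inj.
    by move: hLj; rewrite E'; case: (neq0_cases cj0) => h; nra.
  have := hp x (rcons (rcons (y :: s) j) l).
  rewrite !rcons_path Pc last_rcons /altrel Lj' hLj jl Pj !size_rcons /=.
  by move=> /(_ isT); rewrite !ltnS => /ltnW.
have [g [gs gl gpos gr]] := IH cq j cqj cqr hp'.
have j1n : (j.+1 < n)%N := leq_ltn_trans jl (ltn_ord l).
pose j1 := Ordinal j1n.
pose r := (t j + t j1) / 2.
have tjr : t j < r by have := t_incr (ltnSn j : (j < j1)%N); rewrite /r; lra.
have rti : forall i : 'I_n, (j < i)%N -> r < t i.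
  move=> i ji; have := t_incr (ltnSn j : (j < j1)%N); have := t_le (ji : (j1 <= i)%N).
  rewrite /r; lra.
exists (g * (r%:P - 'X)); split.
- apply: leq_trans (size_polyMleq _ _) _.
  rewrite -opprB size_polyN size_XsubC addn2 /=; exact: gs.
- rewrite lead_coefM -opprB lead_coefN lead_coefXsubC.
  move: gl; rewrite /cq leqnn => gl.
  case: (neq0_cases cl0) => h1; case: (neq0_cases cj0) => h2; nra.
- move=> i; rewrite hornerM hornerD hornerN hornerC hornerX.
  case: (leqP i j) => ij.
    have := gpos i; rewrite /cq ij => gi.
    have := t_le ij => tij.
    have : 0 < r - t i by lra.
    move=> h; nra.
  have gi := gr i (ltnW ij); move: gi; rewrite /cq leqnn => gi.
  have hri := rti i ij.
  have hci : 0 <= c i * c l by rewrite leNgt; apply/negP => /jmax; rewrite leqNgt ij.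
  have hcg : c i * g.[t i] <= 0.
    case: (neq0_cases cl0) => h1; case: (neq0_cases cj0) => h2.
    - by exfalso; nra.
    - have g0 : 0 < g.[t i] by nra.
      have ci0 : c i <= 0 by nra.
      nra.
    - have g0 : g.[t i] < 0 by nra.
      have ci0 : 0 <= c i by nra.
      nra.
    - by exfalso; nra.
  have : r - t i < 0 by lra.
  move=> h; nra.
- move=> i li; rewrite hornerM hornerD hornerN hornerC hornerX.
  have ji : (j < i)%N := leq_trans jl li.
  have gi := gr i (ltnW ji); move: gi; rewrite /cq leqnn => gi.
  have hri := rti i ji.
  have h : r - t i < 0 by lra.
  have hcg : c l * g.[t i] < 0.
    case: (neq0_cases cl0) => h1; case: (neq0_cases cj0) => h2.
    - by exfalso; nra.
    - have g0 : 0 < g.[t i] by nra.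
      nra.
    - have g0 : g.[t i] < 0 by nra.
      nra.
    - by exfalso; nra.
  nra.
Qed.


Definition mom (c : 'I_n -> R) (k : nat) := \sum_i c i * t i ^+ k.

Lemma sum_horner_wide (c : 'I_n -> R) (f : {poly R}) (N : nat) :
  (size f <= N)%N ->
  \sum_i c i * f.[t i] = \sum_(k < N) f`_k * mom c k.
Proof.
move=> hN.
under eq_bigr => i _ do rewrite (horner_coef_wide _ hN) mulr_sumr.
rewrite exchange_big /=; apply: eq_bigr => k _.
rewrite /mom mulr_sumr; apply: eq_bigr => i _; ring.
Qed.

Lemma last_nz (c : 'I_n -> R) : (exists i, c i != 0) ->
  exists l, c l != 0 /\ forall i : 'I_n, (l < i)%N -> c i = 0.
Proof.
move=> [i0 ci0].
case: (@arg_maxnP _ i0 (fun j => c j != 0) (fun j : 'I_n => val j) ci0) => l Pl lmax.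
exists l; split => // i li; apply/eqP; apply: contraTT li => /lmax.
by rewrite -leqNgt.
Qed.

Lemma sum_pos_one (F : 'I_n -> R) (l : 'I_n) :
  (forall i, 0 <= F i) -> 0 < F l -> 0 < \sum_i F i.
Proof.
move=> h hl; rewrite (bigD1 l) //=.
have : 0 <= \sum_(i | i != l) F i by apply: sumr_ge0.
move=> h2; lra.
Qed.

Lemma lemA (D : nat) (c : 'I_n -> R) : (exists i, c i != 0) ->
  (forall k, (k <= D)%N -> mom c k = 0) ->
  exists x s, path (altrel c) x s /\ size s = D.+1.
Proof.
move=> nz hm.
destruct (classic (exists x s, path (altrel c) x s /\ (D < size s)%N)) as [[x [s [p hs]]]|H].
  exists x, (take D.+1 s); split; first exact: take_path.
  by rewrite size_takel.
have hp : forall x s, path (altrel c) x s -> (size s <= D)%N.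
  move=> x s p; rewrite leqNgt; apply/negP => hs; apply: H; by exists x, s.
have [l [cl0 cr]] := last_nz nz.
have [f [fs fl fpos fr]] := polyP cl0 cr hp.
have := sum_horner_wide c fs.
rewrite [X in _ = X]big1; last by move=> k _; rewrite hm ?mulr0 // -ltnS.
have := sum_pos_one fpos (fr l (leqnn _)).
move=> h1 h2; move: h1; rewrite h2 ltxx //.
Qed.

Lemma path_nz (c : 'I_n -> R) x y s : path (altrel c) x (y :: s) ->
  forall i, i \in x :: y :: s -> c i != 0.
Proof.
elim: s x y => [|z s IH] x y /=.
  move=> /andP [/andP [_ h] _] i; rewrite !inE => /orP [/eqP ->|/eqP ->].
    exact: prod_neg_neq0l h.
  exact: prod_neg_neq0r h.
move=> /andP [/andP [_ h] p] i; rewrite inE => /orP [/eqP ->|].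
  exact: prod_neg_neq0l h.
by apply: IH.
Qed.

Lemma path_uniq (c : 'I_n -> R) x s : path (altrel c) x s -> uniq (x :: s).
Proof.
move=> p.
have p' : path (fun a b : 'I_n => (a < b)%N) x s.
  by apply: sub_path p => a b /andP [].
apply: (@sorted_uniq _ (fun a b : 'I_n => (a < b)%N)) => //.
- by move=> a b e; apply: ltn_trans.
- by move=> a; rewrite ltnn.
Qed.

Lemma path_sorted (c : 'I_n -> R) x s : path (altrel c) x s ->
  sorted (fun a b : 'I_n => (a < b)%N) (x :: s).
Proof. by move=> p; apply: sub_path p => a b /andP []. Qed.

Lemma lemB (D : nat) (c : 'I_n -> R) : (exists i, c i != 0) ->
  (forall k, (k <= D)%N -> mom c k = 0) -> mom c D.+1 <= 0 ->
  exists x s, [/\ path (altrel c) x s, size s = D.+1 & c (last x s) < 0].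
Proof.
move=> nz hm hD.
destruct (classic (exists x s, [/\ path (altrel c) x s, size s = D.+1 & c (last x s) < 0])) as [h|H] => //.
exfalso.
have step1 : forall x s, path (altrel c) x s -> (size s <= D.+1)%N.
  move=> x s p; rewrite leqNgt; apply/negP => hs.
  have p2 := take_path D.+2 p.
  have hs2 : size (take D.+2 s) = D.+2 by rewrite size_takel.
  move: p2 hs2; set s2 := take D.+2 s => p2 hs2.
  case: (ltP (c (last x s2)) 0) => hl.
    case: s2 p2 hs2 hl => [|y s3] //= /andP [_ p3] [hs3] hl.
    by apply: H; exists y, s3; split.
  move: p2 hs2 hl; case/lastP: s2 => [|q z] //.
  rewrite rcons_path last_rcons size_rcons => /andP [pp /andP [_ hz]] [hs3] hl.
  apply: H; exists x, q; split => //; nra.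
have [l [cl0 cr]] := last_nz nz.
have clp : 0 < c l.
  case: (neq0_cases cl0) => // hl; exfalso.
  have [x [s [p hs]]] := lemA nz hm.
  case: (ltP (c (last x s)) 0) => hL.
    by apply: H; exists x, s; split.
  case: s p hs hL => [|y s] // p [hs] hL.
  have nzL : c (last x (y :: s)) != 0 by apply: (path_nz p); rewrite mem_last.
  have hL' : c (last x (y :: s)) * c l < 0 by case: (neq0_cases nzL) => h; nra.
  have Ll : (last x (y :: s) < l)%N.
    rewrite ltn_neqAle; apply/andP; split.
      apply/eqP => E; have E' : last x (y :: s) = l by apply: val_inj.
      by move: hL'; rewrite E'; nra.
    by rewrite leqNgt; apply/negP => /cr /eqP; apply/negP.
  have := step1 x (rcons (y :: s) l); rewrite rcons_path p /altrel Ll hL' size_rcons /= hs.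
  by move=> /(_ isT); rewrite ltnn.
have [f [fs fl fpos fr]] := polyP cl0 cr step1.
have := sum_horner_wide c fs.
rewrite big_ord_recr /= [X in _ = X + _]big1; last by move=> k _; rewrite hm ?mulr0 // -ltnS.
rewrite add0r.
have fD : 0 <= f`_D.+1.
  move: fs; rewrite leq_eqVlt => /orP [/eqP fs|fs].
    by move: fl; rewrite lead_coefE fs /= => fl; nra.
  by rewrite nth_default.
have := sum_pos_one fpos (fr l (leqnn _)).
move=> h1 h2; move: h1; rewrite h2; nra.
Qed.

Lemma count_neg_last (c : 'I_n -> R) x s : path (altrel c) x s ->
  c (last x s) < 0 -> count (fun i => c i < 0) (x :: s) = uphalf (size s).+1.
Proof.
suff : path (altrel c) x s -> count (fun i => c i < 0) (x :: s) =
   if c (last x s) < 0 then uphalf (size s).+1 else (size s).+1./2.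
  by move=> h p hl; rewrite h // hl.
elim/last_ind: s => [|p y IH] /=.
  by case: (c x < 0).
rewrite rcons_path last_rcons => /andP [pp /andP [_ hy]].
have := IH pp; rewrite /= => IH'.
rewrite -cats1 count_cat addnA IH' size_cat /= addn1 addn0.
case: (ltP (c y) 0) => hy0.
  have : ~~ (c (last x p) < 0) by rewrite -leNgt; nra.
  move/negbTE => -> /=; rewrite addn1 //.
have : c (last x p) < 0 by nra.
move=> -> /=; rewrite addn0 //.
Qed.

Lemma kernel (D : nat) (x : 'I_n) (s : seq 'I_n) : uniq (x :: s) -> size s = D.+1 ->
  exists e : 'I_n -> R, [/\ exists i, e i != 0,
    (forall i, i \notin x :: s -> e i = 0) & forall k, (k <= D)%N -> mom e k = 0].
Proof.
move=> us hs.
pose A : 'M[R]_(D.+2, D.+1) := \matrix_(a, b) t (nth x (x :: s) a) ^+ b.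
have hK : kermx A != 0 by rewrite kermx_eq0 -row_leq_rank -ltnNge ltnS rank_leq_col.
have [a ha] : exists a, row a (kermx A) != 0.
  destruct (classic (exists a, row a (kermx A) != 0)) as [h|h]; first exact h.
  case/negP: hK; apply/eqP/row_matrixP => a; rewrite row0; apply/eqP.
  by apply/negPn/negP => na; apply: h; exists a.
pose u := row a (kermx A).
have uA : u *m A = 0 by rewrite /u -row_mul mulmx_ker row0.
have [b hb] : exists b, u 0 b != 0.
  destruct (classic (exists b, u 0 b != 0)) as [h|h]; first exact h.
  case/negP: ha; apply/eqP/rowP => b; rewrite [RHS]mxE.
  by apply/eqP/negPn/negP => na; apply: h; exists b.
have szp : size (x :: s) = D.+2 by rewrite /= hs.
pose e i := \sum_(a' < D.+2) (nth x (x :: s) a' == i)%:R * u 0 a'.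
have eE : forall a' : 'I_D.+2, e (nth x (x :: s) a') = u 0 a'.
  move=> a'; rewrite /e (bigD1 a') //= eqxx mul1r big1 ?addr0 // => a2 ne.
  have ne' : (a2 : nat) != a' := ne.
  by rewrite nth_uniq ?szp ?ltn_ord // (negbTE ne') mul0r.
exists e; split.
- by exists (nth x (x :: s) b); rewrite eE.
- move=> i ni; rewrite /e big1 // => a' _.
  case: eqP => [E|_]; last by rewrite mul0r.
  by exfalso; move/negP: ni; apply; rewrite -E mem_nth // szp ltn_ord.
- move=> k hk.
  have hk' : (k < D.+1)%N by rewrite ltnS.
  have := congr1 (fun M : 'M[R]_(1, D.+1) => M 0 (Ordinal hk')) uA; rewrite !mxE /= => <-.
  rewrite /mom /e.
  rewrite (eq_bigr (fun i : 'I_n => \sum_(a' < D.+2) (nth x (x :: s) a' == i)%:R * u 0 a' * t i ^+ k)); last first.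
    by move=> i _; rewrite mulr_suml.
  rewrite exchange_big /=; apply: eq_bigr => a' _.
  rewrite (bigD1 (nth x (x :: s) a')) //= eqxx mul1r big1 ?addr0; first by rewrite /A !mxE.
  by move=> i ne; rewrite eq_sym (negbTE ne) !mul0r.
Qed.

Lemma AI (D : nat) (S : {set 'I_n}) (c : 'I_n -> R) : (#|S| <= D.+1)%N ->
  (forall i, i \notin S -> c i = 0) -> (forall k, (k <= D)%N -> mom c k = 0) ->
  forall i, c i = 0.
Proof.
move=> hS hsup hm i; apply/eqP; apply/negPn/negP => ci.
have [x [s [p hs]]] := lemA (ex_intro _ i ci) hm.
have u := path_uniq p.
destruct s as [|y s'] => //.
have sub : {subset x :: y :: s' <= enum S}.
  move=> j hj; rewrite mem_enum; apply/negPn/negP => nj.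
  by move: (path_nz p hj); rewrite hsup ?eqxx.
have := uniq_leq_size u sub; rewrite -cardE /=.
move: hs => /= hs h; move: (leq_trans h hS); by rewrite -hs ltnn.
Qed.

Lemma path_in_size (c e : 'I_n -> R) x s y s' : path (altrel c) x s ->
  path (altrel e) y s' -> (forall i, i \notin x :: s -> e i = 0) -> s' != [::] ->
  (size (y :: s') <= size (x :: s))%N /\ {subset y :: s' <= x :: s}.
Proof.
move=> pc pe sup ne.
have sub : {subset y :: s' <= x :: s}.
  move=> j hj; apply/negPn/negP => nj.
  destruct s' as [|z s''] => //.
  by move: (path_nz pe hj); rewrite sup ?eqxx.
split=> //; exact: uniq_leq_size (path_uniq pe) sub.
Qed.

Lemma path_in (c e : 'I_n -> R) x s y s' : path (altrel c) x s ->
  path (altrel e) y s' -> (forall i, i \notin x :: s -> e i = 0) -> s' != [::] ->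
  (size s <= size s')%N -> y :: s' = x :: s.
Proof.
move=> pc pe sup ne hsz.
have [_ sub] := path_in_size pc pe sup ne.
have [_ eqm] := uniq_min_size (path_uniq pe) sub hsz.
apply: (@irr_sorted_eq _ (fun a b : 'I_n => (a < b)%N)).
- by move=> a b e'; apply: ltn_trans.
- by move=> a; rewrite ltnn.
- exact: path_sorted pe.
- exact: path_sorted pc.
- exact: eqm.
Qed.

Lemma agree (c e : 'I_n -> R) x s : path (altrel c) x s -> path (altrel e) x s ->
  0 < e (last x s) * c (last x s) -> forall i, i \in x :: s -> 0 < e i * c i.
Proof.
elim: s x => [|y s IH] x /=.
  by move=> _ _ h i; rewrite inE => /eqP ->.
move=> /andP [/andP [_ hc] pc] /andP [/andP [_ he] pe] hl.
have IH' := IH y pc pe hl.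
move=> i; rewrite inE => /orP [/eqP ->|hi]; last exact: IH'.
have hy := IH' y (mem_head _ _).
nra.
Qed.

Lemma altrelN (e : 'I_n -> R) : altrel (fun i => - e i) =2 altrel e.
Proof. by move=> a b; rewrite /altrel mulrNN. Qed.

Lemma momN (e : 'I_n -> R) k : mom (fun i => - e i) k = - mom e k.
Proof. by rewrite /mom -sumrN; apply: eq_bigr => i _; rewrite mulNr. Qed.

Lemma circ (D : nat) (c : 'I_n -> R) x s : path (altrel c) x s -> size s = D.+1 ->
  exists e : 'I_n -> R, [/\ (forall i, i \notin x :: s -> e i = 0),
    (forall k, (k <= D)%N -> mom e k = 0), path (altrel e) x s &
    forall i, i \in x :: s -> 0 < e i * c i].
Proof.
move=> pc hs.
have [e0 [nz sup hm]] := kernel (path_uniq pc) hs.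
have [y [s' [pe hs']]] := lemA nz hm.
have ne : s' != [::] by rewrite -size_eq0 hs'.
have hsz : (size s <= size s')%N by rewrite hs hs'.
have E := path_in pc pe sup ne hsz.
case: E => E1 E2; subst y s'.
have sne : s != [::] by rewrite -size_eq0 hs.
have nzL : e0 (last x s) != 0.
  by destruct s as [|z s] => //; apply: (path_nz pe); rewrite mem_last.
have nzc : c (last x s) != 0.
  by destruct s as [|z s] => //; apply: (path_nz pc); rewrite mem_last.
case: (ltP 0 (e0 (last x s) * c (last x s))) => hsg.
  by exists e0; split => //; apply: agree.
exists (fun i => - e0 i); split.
- by move=> i /sup ->; rewrite oppr0.
- by move=> k hk; rewrite momN hm ?oppr0.
- by rewrite (eq_path (altrelN e0)).
- apply: agree => //; first by rewrite (eq_path (altrelN e0)).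
  have : e0 (last x s) * c (last x s) != 0 by rewrite mulf_neq0.
  move=> h; case: (neq0_cases h) => h'; nra.
Qed.

Lemma circ_neg (D : nat) (c e : 'I_n -> R) x s : path (altrel c) x s -> size s = D.+1 ->
  c (last x s) < 0 -> (forall i, i \notin x :: s -> e i = 0) ->
  (forall k, (k <= D)%N -> mom e k = 0) -> path (altrel e) x s ->
  (forall i, i \in x :: s -> 0 < e i * c i) -> mom e D.+1 < 0.
Proof.
move=> pc hs hl sup hm pe ag.
have ex0 : e x != 0 by have := ag x (mem_head _ _); apply: contraTneq => ->; rewrite mul0r ltxx.
case: (ltgtP (mom e D.+1) 0) => // hm1.
- have nz : exists i, - e i != 0 by exists x; rewrite oppr_eq0.
  have hm' : forall k, (k <= D)%N -> mom (fun i => - e i) k = 0.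
    by move=> k hk; rewrite momN hm ?oppr0.
  have hD : mom (fun i => - e i) D.+1 <= 0 by rewrite momN; lra.
  have [y [s' [pe' hs' hl']]] := lemB nz hm' hD.
  have sup' : forall i, i \notin x :: s -> - e i = 0 by move=> i /sup ->; rewrite oppr0.
  have ne : s' != [::] by rewrite -size_eq0 hs'.
  have hsz : (size s <= size s')%N by rewrite hs hs'.
  have [E1 E2] := path_in pc pe' sup' ne hsz.
  subst y s'.
  have := ag (last x s) (mem_last _ _); nra.
- have nz : exists i, e i != 0 by exists x.
  have hm' : forall k, (k <= D.+1)%N -> mom e k = 0.
    move=> k; rewrite leq_eqVlt => /orP [/eqP ->|hk]; first exact: hm1.
    by apply: hm; rewrite -ltnS.
  have [y [s' [pe' hs']]] := lemA nz hm'.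
  have ne : s' != [::] by rewrite -size_eq0 hs'.
  have [hsz _] := path_in_size pc pe' sup ne.
  by move: hsz; rewrite /= hs hs' ltnn.
Qed.

Variable d : nat.

Lemma momB (lam mu : 'I_n -> R) k :
  mom (fun i => lam i - mu i) k = \sum_i lam i * t i ^+ k - \sum_i mu i * t i ^+ k.
Proof. by rewrite /mom -sumrB; apply: eq_bigr => i _; rewrite mulrBl. Qed.

Lemma coord_pt (lam : 'I_n -> R) k (hk : (k < d)%N) :
  (\sum_i lam i *: pt d t i) 0 (Ordinal hk) = \sum_i lam i * t i ^+ k.+1.
Proof. by rewrite summxE; apply: eq_bigr => i _; rewrite !mxE. Qed.

Lemma mom_of_pts (lam mu : 'I_n -> R) :
  \sum_i lam i *: pt d t i = \sum_i mu i *: pt d t i ->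
  \sum_i lam i = \sum_i mu i ->
  forall k, (k <= d)%N -> mom (fun i => lam i - mu i) k = 0.
Proof.
move=> hp hs [|k] hk.
  rewrite momB; under eq_bigr do rewrite expr0 mulr1.
  by under [X in _ - X]eq_bigr do rewrite expr0 mulr1; rewrite hs subrr.
rewrite momB -(coord_pt lam hk) -(coord_pt mu hk) hp subrr //.
Qed.

Lemma uniq_coef (S : {set 'I_n}) (lam mu : 'I_n -> R) : (#|S| <= d.+1)%N ->
  (forall i, i \notin S -> lam i = 0) -> (forall i, i \notin S -> mu i = 0) ->
  \sum_i lam i *: pt d t i = \sum_i mu i *: pt d t i ->
  \sum_i lam i = \sum_i mu i -> forall i, lam i = mu i.
Proof.
move=> hS hl hm hp hs i.
have := AI hS (c := fun i => lam i - mu i) _ (mom_of_pts hp hs) i.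
move=> h; apply/eqP; rewrite -subr_eq0; apply/eqP; apply: h.
by move=> j hj; rewrite hl // hm // subrr.
Qed.

Definition posp (e : 'I_n -> R) i := if 0 < e i then e i else 0.
Definition negp (e : 'I_n -> R) i := if e i < 0 then - e i else 0.

Lemma posnegE (e : 'I_n -> R) i : posp e i - negp e i = e i.
Proof.
rewrite /posp /negp; case: (ltgtP (e i) 0) => h.
- by rewrite sub0r opprK.
- by rewrite subr0.
- by rewrite h subrr.
Qed.

Lemma posp_ge0 e i : 0 <= posp e i.
Proof. by rewrite /posp; case: ifP => // /ltW. Qed.
Lemma negp_ge0 e i : 0 <= negp e i.
Proof. by rewrite /negp; case: ifP => // h; rewrite oppr_ge0 ltW. Qed.

Lemma dep_conv (e : 'I_n -> R) (S1 S2 : {set 'I_n}) :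
  (exists i, e i != 0) -> (forall k, (k <= d)%N -> mom e k = 0) ->
  (forall i, 0 < e i -> i \in S1) -> (forall i, e i < 0 -> i \in S2) ->
  exists lam mu s, [/\ convex_coef S1 lam, convex_coef S2 mu,
    \sum_i lam i *: pt d t i = \sum_i mu i *: pt d t i, 0 < s &
    (\sum_i lam i * t i ^+ d.+1 - \sum_i mu i * t i ^+ d.+1) * s = mom e d.+1]
   /\ ((forall i, 0 < lam i -> 0 < e i) /\ exists i, 0 < lam i).
Proof.
move=> [i0 nz] hm h1 h2.
pose s := \sum_i posp e i.
have eE : forall k, mom e k = mom (fun i => posp e i - negp e i) k.
  by move=> k; apply: eq_bigr => i _; rewrite posnegE.
have sn : \sum_i negp e i = s.
  have := hm 0%N (leq0n _); rewrite eE momB.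
  under eq_bigr do rewrite expr0 mulr1.
  under [X in _ - X = _]eq_bigr do rewrite expr0 mulr1.
  by move/eqP; rewrite subr_eq0 => /eqP.
have s0 : 0 < s.
  case: (neq0_cases nz) => h.
    rewrite -sn; apply: (sum_pos_one (l := i0)); first exact: negp_ge0.
    by rewrite /negp h oppr_gt0.
  apply: (sum_pos_one (l := i0)); first exact: posp_ge0.
  by rewrite /posp h.
have sne : s != 0 by rewrite gt_eqF.
have pts : \sum_i posp e i *: pt d t i = \sum_i negp e i *: pt d t i.
  apply/rowP => k; rewrite !summxE; apply/eqP; rewrite -subr_eq0 -sumrB; apply/eqP.
  have := hm k.+1 (ltn_ord k); rewrite eE /mom => h.
  rewrite -[RHS]h; apply: eq_bigr => i _; rewrite !mxE; ring.
exists (fun i => posp e i / s), (fun i => negp e i / s), s; split; [split|split].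
- split; first by move=> i; apply: divr_ge0; [exact: posp_ge0| exact: ltW].
  split; first by move=> i hi; rewrite /posp; case: ifP => hp; [by move: hi; rewrite h1 | rewrite mul0r].
  by rewrite -mulr_suml divff.
- split; first by move=> i; apply: divr_ge0; [exact: negp_ge0| exact: ltW].
  split; first by move=> i hi; rewrite /negp; case: ifP => hp; [by move: hi; rewrite h2 | rewrite mul0r].
  by rewrite -mulr_suml sn divff.
- under eq_bigr do rewrite mulrC -scalerA.
  under [RHS]eq_bigr do rewrite mulrC -scalerA.
  by rewrite -!scaler_sumr pts.
- exact: s0.
- rewrite eE momB mulrBl !mulr_suml; congr (_ - _); apply: eq_bigr => i _.
  1,2: (field; exact: sne).
- move=> i; rewrite /posp; case: ifP => // _; by rewrite mul0r ltxx.
- case: (neq0_cases nz) => h.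
    have : exists i, 0 < posp e i.
      destruct (classic (exists i, 0 < posp e i)) as [hh|hh] => //.
      exfalso.
      have : s = 0.
        rewrite /s big1 // => i _; apply/eqP; rewrite eq_le posp_ge0 andbT.
        by rewrite leNgt; apply/negP => hi; apply: hh; exists i.
      by move=> hs; move: s0; rewrite hs ltxx.
    by move=> [i hi]; exists i; apply: divr_gt0.
  by exists i0; apply: divr_gt0 => //; rewrite /posp h.
Qed.

Lemma convex_sub (S S' : {set 'I_n}) (lam : 'I_n -> R) :
  S \subset S' -> convex_coef S lam -> convex_coef S' lam.
Proof.
move=> hs [nn [sp sm]]; split=> //; split=> // i hi; apply: sp.
by apply: contra hi; apply: (subsetP hs).
Qed.

Lemma face_le (T : {set {set 'I_n}}) (hT : triangulation d t T) (rho sigma : {set 'I_n}) :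
  rho \in T -> sigma \subset rho -> le_tri d t sigma T.
Proof.
move=> hr hs rho' hr' p h1 h2 [nu [cnu pnu hnu]] [nu' [cnu' pnu' hnu']].
case: hT => hsz _ hno.
have ov := hno rho rho' hr hr'.
have hin : in_conv t (rho :&: rho') p.
  apply: NNPP => nin; apply: ov; exists p; split => //.
  - by exists nu; split => //; apply: convex_sub hs cnu.
  - by exists nu'.
case: hin => om [com pom].
have cnu2 := convex_sub hs cnu.
case: cnu2 => _ [snu mnu].
case: cnu' => _ [snu' mnu'].
case: com => _ [som mom1].
have e1 : forall i, nu i = om i.
  apply: (uniq_coef (S := rho)).
  - by rewrite hsz.
  - exact: snu.
  - by move=> i hi; apply: som; rewrite inE negb_and hi.
  - by rewrite -pnu -pom.
  - by rewrite mnu mom1.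
have e2 : forall i, nu' i = om i.
  apply: (uniq_coef (S := rho')).
  - by rewrite hsz.
  - exact: snu'.
  - by move=> i hi; apply: som; rewrite inE negb_and hi orbT.
  - by rewrite -pnu' -pom.
  - by rewrite mnu' mom1.
rewrite hnu hnu' le_eqVlt; apply/orP; left; apply/eqP.
by apply: eq_bigr => i _; rewrite e1 e2.
Qed.

Lemma back (T : {set {set 'I_n}}) (hT : triangulation d t T) (tau : {set 'I_n})
  (d_lt_n : (d < n)%N) (tau_simplex : (#|tau| <= d.+1)%N) (tau_le : le_tri d t tau T) :
  ~ is_face T tau -> exists sigma, in_sub d t T sigma /\ lt_lift d t tau sigma.
Proof.
move=> nf.
have n0 : (0 < n)%N by apply: leq_ltn_trans d_lt_n.
have cover : forall p : 'rV[R]_d, in_conv t [set: 'I_n] p ->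
    exists2 rho, rho \in T & in_conv t rho p by case: hT.
case: (set_0Vmem tau) => [t0|[i1 i1t]].
  exfalso; apply: nf.
  pose i0 := Ordinal n0.
  have : in_conv t [set: 'I_n] (pt d t i0).
    exists (fun i => (i == i0)%:R); split.
      split; first by move=> i; rewrite ler0n.
      split; first by move=> i; rewrite inE.
      by rewrite (bigD1 i0) //= ?eqxx big1 ?addr0 // => i /negbTE ->.
    by rewrite (bigD1 i0) //= ?eqxx ?scale1r big1 ?addr0 // => i /negbTE ->; rewrite scale0r.
  move/cover => [rho hr _]; exists rho => //; rewrite t0 sub0set //.
pose k := #|tau|.
have k0 : (0 < k)%N by apply/card_gt0P; exists i1.
pose lam i := if i \in tau then (k%:R)^-1 else 0 : R.
have clam : convex_coef tau lam.
  split.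
    by move=> i; rewrite /lam; case: ifP => _; [rewrite invr_ge0 ler0n | exact: lexx].
  split; first by move=> i hi; rewrite /lam (negbTE hi).
  rewrite /lam -big_mkcond sumr_const -/k -(mulr_natl (k%:R^-1) k) mulfV //.
  by rewrite pnatr_eq0 -lt0n k0.
pose b := \sum_i lam i *: pt d t i.
have [rho hr [mu [cmu pmu]]] : exists2 rho, rho \in T & in_conv t rho b.
  by apply: cover; exists lam; split => //; apply: convex_sub clam; apply: subsetT.
have [i0 i0t i0r] : exists2 i0, i0 \in tau & i0 \notin rho.
  apply/subsetPn; apply/negP => sub; apply: nf; by exists rho.
pose c i := lam i - mu i.
case: (clam) => lnn [lsp lsm].
case: (cmu) => mnn [msp msm].
have cmom : forall kk, (kk <= d)%N -> mom c kk = 0.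
  apply: mom_of_pts; first by rewrite -pmu.
  by rewrite lsm msm.
have kpos : 0 < (k%:R)^-1 :> R by rewrite invr_gt0 ltr0n.
have cnz : exists i, c i != 0.
  exists i0; rewrite /c /lam i0t msp // subr0; exact: lt0r_neq0.
have cD : mom c d.+1 <= 0.
  rewrite momB subr_le0; apply: (tau_le rho hr b).
  - by exists lam; split.
  - by exists mu; split.
have [x [s [pc hs hl]]] := lemB cnz cmom cD.
have [e [esup emom pe eag]] := circ pc hs.
have cpos : forall i, 0 < c i -> i \in tau.
  move=> i hi; apply/negPn/negP => ni; move: hi; rewrite /c lsp //.
  have := mnn i; lra.
have cneg : forall i, c i < 0 -> i \in rho.
  move=> i hi; apply/negPn/negP => ni; move: hi; rewrite /c msp //.
  have := lnn i; lra.
have einpi : forall i, e i != 0 -> i \in x :: s.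
  by move=> i hi; apply/negPn/negP => ni; move: hi; rewrite esup // eqxx.
pose sigma := [set i | (i \in x :: s) && (c i < 0)].
have ssub : sigma \subset rho.
  by apply/subsetP => i; rewrite inE => /andP [_ /cneg].
have epos : forall i, 0 < e i -> i \in tau.
  move=> i hi; have hp := einpi i (lt0r_neq0 hi).
  have := eag i hp => h; apply: cpos; nra.
have eneg : forall i, e i < 0 -> i \in sigma.
  move=> i hi; have hp := einpi i (ltr0_neq0 hi).
  have := eag i hp => h; rewrite inE hp /=; nra.
have ssz : #|sigma| = (uphalf d).+1.
  have -> : sigma = [set i in filter (fun i => c i < 0) (x :: s)].
    by apply/setP => i; rewrite !inE mem_filter andbC.
  rewrite cardsE (card_uniqP _); last by rewrite filter_uniq // (path_uniq pc).
  by rewrite size_filter (count_neg_last pc hl) hs.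
exists sigma; split.
  split => //; exact: (face_le hT hr ssub).
split.
  have enz : exists i, e i != 0.
    exists x; have := eag x (mem_head _ _).
    by apply: contraTneq => ->; rewrite mul0r ltxx.
  have [lam' [mu' [s' [[cl' cm' pp s0 _] [lpos [j jpos]]]]]] := dep_conv enz emom epos eneg.
  exists (\sum_i lam' i *: pt d t i); split.
  - by exists lam'.
  - by exists mu'; split.
  - move=> [om [com pom]].
    case: (cl') => _ [sl' ml'].
    case: (com) => _ [som mom1].
    have eq1 : forall i, lam' i = om i.
      apply: (uniq_coef (S := tau)) => //.
      - by move=> i hi; apply: som; rewrite inE negb_and hi.
      - by rewrite ml' mom1.
    have ej := lpos j jpos.
    have hpj := einpi j (lt0r_neq0 ej).
    have := eag j hpj => h.
    have : j \notin tau :&: sigma.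
      rewrite in_setI negb_and; apply/orP; right; rewrite in_set negb_and hpj /= -leNgt; nra.
    move/som; rewrite -eq1 => h0; move: jpos; rewrite h0 ltxx //.
move=> p h1 h2 H1 [be [cbe pbe hbe]].
apply: (tau_le rho hr) H1 _.
by exists be; split => //; apply: convex_sub ssub cbe.
Qed.

Lemma fwd (T : {set {set 'I_n}}) (hT : triangulation d t T) (tau : {set 'I_n}) :
  is_face T tau -> ~ exists sigma, in_sub d t T sigma /\ lt_lift d t tau sigma.
Proof.
move=> [rho hr trho] [sigma [[sle ssz] [[p [[al [cal pal]] [be [cbe pbe]] nint]] hle]]].
pose ha := \sum_i al i * t i ^+ d.+1.
pose hb := \sum_i be i * t i ^+ d.+1.
have h1 : ha <= hb.
  apply: (hle p) ; [by exists al; split | by exists be; split].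
have h2 : hb <= ha.
  apply: (sle rho hr p); first by exists be; split.
  by exists al; split => //; apply: convex_sub trho cal.
case: (cal) => ann [asp asm].
case: (cbe) => bnn [bsp bsm].
pose c i := al i - be i.
have cmom : forall kk, (kk <= d)%N -> mom c kk = 0.
  apply: mom_of_pts; first by rewrite -pal -pbe.
  by rewrite asm bsm.
destruct (classic (exists i, c i != 0)) as [cnz|hz]; last first.
  apply: nint; exists al; split => //; split => //; split => // i.
  have ci : al i = be i.
    apply/eqP; rewrite -subr_eq0; apply/negPn/negP => ne; apply: hz; by exists i.
  rewrite inE negb_and => /orP [/asp //|/bsp]; by rewrite ci.
have cD : mom c d.+1 <= 0 by rewrite momB -/ha -/hb; lra.
have [x [s [pc hs hl]]] := lemB cnz cmom cD.
have [e [esup emom pe eag]] := circ pc hs.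
have mneg := circ_neg pc hs hl esup emom pe eag.
have einpi : forall i, e i != 0 -> i \in x :: s.
  by move=> i hi; apply/negPn/negP => ni; move: hi; rewrite esup // eqxx.
have epos : forall i, 0 < e i -> i \in rho.
  move=> i hi; have hp := einpi i (lt0r_neq0 hi).
  have := eag i hp => h; apply: (subsetP trho).
  apply/negPn/negP => ni.
  have : 0 < c i by nra.
  rewrite /c asp //; have := bnn i; lra.
have eneg : forall i, e i < 0 -> i \in sigma.
  move=> i hi; have hp := einpi i (ltr0_neq0 hi).
  have := eag i hp => h.
  apply/negPn/negP => ni.
  have : c i < 0 by nra.
  rewrite /c bsp //; have := ann i; lra.
have enz : exists i, e i != 0.
  exists x; have := eag x (mem_head _ _).
  by apply: contraTneq => ->; rewrite mul0r ltxx.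
have [lam' [mu' [s' [[cl' cm' pp s0 hd] _]]]] := dep_conv enz emom epos eneg.
have : \sum_i mu' i * t i ^+ d.+1 <= \sum_i lam' i * t i ^+ d.+1.
  apply: (sle rho hr (\sum_i lam' i *: pt d t i)).
  - by exists mu'; split.
  - by exists lam'; split.
move=> h3; move: hd; set A := \sum_i lam' i * t i ^+ d.+1; set B := \sum_i mu' i * t i ^+ d.+1.
move=> hd.
have : 0 <= (A - B) * s' by apply: mulr_ge0; [rewrite subr_ge0; exact: h3 | exact: ltW].
by rewrite hd => h4; move: mneg; rewrite ltNge h4.
Qed.

Lemma main_sec (T : {set {set 'I_n}}) (hT : triangulation d t T) (tau : {set 'I_n})
  (d_lt_n : (d < n)%N) (tau_simplex : (#|tau| <= d.+1)%N) (tau_le : le_tri d t tau T) :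
  is_face T tau <-> ~ (exists sigma, in_sub d t T sigma /\ lt_lift d t tau sigma).
Proof.
split; first exact: fwd.
move=> H; apply: NNPP => nf; apply: H; exact: back.
Qed.

End Poly.

Theorem lemma2p13 (R : realType) (n d : nat) (t : 'I_n -> R)
    (t_incr : forall i j : 'I_n, (i < j)%N -> t i < t j)
    (d_lt_n : (d < n)%N)
    (T : {set {set 'I_n}}) (hT : triangulation d t T)
    (tau : {set 'I_n}) (tau_simplex : (#|tau| <= d.+1)%N)
    (tau_le : le_tri d t tau T) :
  is_face T tau <-> ~ (exists sigma, in_sub d t T sigma /\ lt_lift d t tau sigma).
Proof.
exact: (main_sec t_incr hT d_lt_n tau_simplex tau_le).
Qed.
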